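(* Let $0\le r\le n$, let $A\in\mathcal{A}_{n+1,r+1}$, and let $\mathcal{T}$ be an arbitrary tiling of $\Gamma(X(A))$. Then the fusion-exchange algorithm produces a tableau $T(A)$, a filling of the tiles of $\mathcal{T}$ with $\alpha$'s, $\beta$'s and $q$'s (some tiles possibly empty), such that: (i) every tile in the same north-strip as, and above, a tile containing $\alpha$ is empty; (ii) every tile in the same west-strip as, and to the left of, a tile containing $\beta$ is empty; (iii) every tile that is not forced to be empty by (i) or (ii) contains an $\alpha$, a $\beta$ or a $q$.
   Context: Words and diagrams. For $0\le r\le n$ let $B_n^r$ be the set of words $X\in\{H,L,0\}^n$ with exactly $r$ letters $L$. If $X$ has $k$ letters $H$, $r$ letters $L$ and $\ell$ letters $0$, its rhombic diagram $\Gamma(X)$ is the closed region bounded by two paths of unit steps, using the directions west (horizontal), south (vertical) and southwest (diagonal: a fixed unit vector strictly between west and south), both going from a point $P$ to a point $Q$: the northwest boundary consists of $\ell$ west steps, then $r$ southwest steps, then $k$ south steps; the southeast boundary is obtained by reading $X$ left to right and taking a west step for each $0$, a southwest step for each $L$, a south step for each $H$. A tiling of $\Gamma(X)$ is a tiling by unit rhombi of three kinds: squares (horizontal and vertical edges), tall rhombi (vertical and diagonal edges), short rhombi (horizontal and diagonal edges). A west-strip (resp. north-strip, northwest-strip) is a maximal set of tiles connected through shared vertical (resp. horizontal, diagonal) edges; each runs from an edge of the southeast boundary to an edge of the northwest boundary. Each tile has two edges on its lower-right side: its east edge (vertical for squares and tall rhombi, diagonal for short rhombi) and its south edge (horizontal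 for squares and short rhombi, diagonal for tall rhombi); the parallel edges on its upper-left side are its west and north edges. Assemblées. An assemblée of size $(m,s)$ is a collection of $s$ nonempty, pairwise disjoint, linearly ordered sets (blocks) with union $\{1,\dots,m\}$; the last element of a block is its block-end. Blocks are listed in the canonical order with decreasing block-ends, and the assemblée is identified with the concatenated word. $\mathcal{A}_{m,s}$ is the set of these. For $A\in\mathcal{A}_{n+1,r+1}$ with block-ends $b_1>\dots>b_{r+1}$, a non-block-end element $x$ is an increase if $x+1$ appears to the right of $x$ in $A$, and a decrease otherwise (so $n+1$, if not a block-end, is a decrease). $X(A)\in B_n^r$ is obtained from $A$ by deleting its last letter $b_{r+1}$ and replacing each increase by $H$, each decrease by $0$ and each remaining block-end by $L$. Fusion-exchange algorithm. A label is a finite, possibly empty, set of consecutive integers; for labels $E,S$ write $E\succ S$ if both are nonempty and $\min E=\max S+1$. Given $A\in\mathcal{A}_{n+1,r+1}$ and a tiling of $\Gamma(X(A))$: initially the southeast boundary edges, in order from $P$ to $Q$, receive the singleton labels of the letters of $A$ from left to right, $b_{r+1}$ omitted. Step: choose a tile whose east and south edges are labeled, say by $E$ and $S$, and whose west and north edges are not. (R I) If $E\succ S$ and the south edge is horizontal: west edge gets $E\cup S$, north edge gets $\emptyset$, place $\alpha$ in the tile. (R II) If $S\succ E$ and the east edge is vertical: north edge gets $E\cup S$, west edge gets $\emptyset$, place $\beta$. (R III) Otherwise: west edge gets $E$, north edge gets $S$, and place $q$ if $E\ne\emptyset$ and $S\ne\emptyset$ (else leave the tile empty). Repeat until every edge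 is labeled; $T(A)$ is the resulting filling. *)

(* Defs.v *)
From HB Require Import structures.
From mathcomp Require Import all_boot.
Set Implicit Arguments. Unset Strict Implicit. Unset Printing Implicit Defensive.

(* Letters of words in {H, L, 0}.  Z stands for the letter 0.          *)
(* H <-> south (vertical) step, L <-> southwest (diagonal), Z <-> west *)
Inductive letter := H | L | Z.

Definition letter_eqb (a b : letter) : bool :=
  match a, b with H, H | L, L | Z, Z => true | _, _ => false end.
Lemma letter_eqP : Equality.axiom letter_eqb.
Proof. by case; case; constructor. Qed.
HB.instance Definition _ := hasDecEq.Build letter letter_eqP.

(* Assemblees.  An assemblee of size (m,s) in canonical order is a list *)
(* of s nonempty blocks (each block a linearly ordered list), whose    *)
(* concatenation is a permutation of 1..m, listed by strictly          *)
(* decreasing block-ends (last elements).                              *)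
Definition assemblee (m s : nat) (B : seq (seq nat)) : Prop :=
  [/\ size B = s,
      all (fun b => b != [::]) B,
      perm_eq (flatten B) (iota 1 m)
    & sorted (fun b c => last 0 c < last 0 b) B].

Definition aword (B : seq (seq nat)) : seq nat := flatten B.

Definition is_blockend (B : seq (seq nat)) (x : nat) : bool :=
  x \in map (last 0) B.

Definition is_increase (B : seq (seq nat)) (x : nat) : bool :=
  ~~ is_blockend B x && (x.+1 \in drop (index x (aword B)).+1 (aword B)).

Definition letter_of (B : seq (seq nat)) (x : nat) : letter :=
  if is_blockend B x then L else if is_increase B x then H else Z.

Definition aword_trunc (B : seq (seq nat)) : seq nat :=
  take (size (aword B)).-1 (aword B).

Definition XA (B : seq (seq nat)) : seq letter := map (letter_of B) (aword_trunc B).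

(* Labels: finite, possibly empty, sets of consecutive integers.        *)
(* None is the empty label; Some (a, b) is the set {a, a+1, ..., b}.    *)
Definition label := option (nat * nat).

(* E > S : both nonempty and min E = max S + 1 *)
Definition lab_succ (E S : label) : bool :=
  match E, S with
  | Some (a, _), Some (_, b) => a == b.+1
  | _, _ => false
  end.

(* E \cup S, used only when E > S (or S > E, by symmetry) *)
Definition lab_union (E S : label) : label :=
  match E, S with
  | Some (a1, b1), Some (a2, b2) => Some (minn a1 a2, maxn b1 b2)
  | Some _, None => E
  | None, _ => S
  end.

Definition lab_nonempty (E : label) : bool := if E is Some _ then true else false.

(* Tilings as flip sequences.                                          *)
(* The current boundary path from P to Q is a list of edges; each edge *)
(* has a direction (letter), the index of the strip it belongs to      *)
(* (= the position on the southeast boundary where that strip starts)   *)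
(* and a label (None also used for "empty label").                     *)
(* A tile is glued on the upper-left of two consecutive edges i, i+1 of *)
(* the current path: edge i is its east edge, edge i+1 its south edge.  *)
(* Square: (east,south) = (H,Z); tall rhombus: (H,L); short rhombus:   *)
(* (L,Z).  After gluing, edge i is replaced by the north edge (parallel *)
(* to the south edge) and edge i+1 by the west edge (parallel to the   *)
(* east edge).                                                          *)
Record edge := Edge { e_let : letter; e_id : nat; e_lab : label }.

Inductive content := Alpha | Beta | Qq | Empty.
Definition content_eqb (a b : content) : bool :=
  match a, b with
  | Alpha, Alpha | Beta, Beta | Qq, Qq | Empty, Empty => true | _, _ => false end.
Lemma content_eqP : Equality.axiom content_eqb.
Proof. by case; case; constructor. Qed.
HB.instance Definition _ := hasDecEq.Build content content_eqP.

Record tile := Tile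
  { t_elet : letter; t_eid : nat; t_slet : letter; t_sid : nat; t_cont : content }.

Definition valid_tile (e s : letter) : bool :=
  match e, s with H, Z | H, L | L, Z => true | _, _ => false end.

Definition dummy_edge := Edge Z 0 None.

Definition fe_step (st : seq edge) (i : nat) : option (tile * seq edge) :=
  let e := nth dummy_edge st i in
  let s := nth dummy_edge st i.+1 in
  if (i.+1 < size st) && valid_tile (e_let e) (e_let s) then
    let E := e_lab e in let S := e_lab s in
    let '(c, north, west) :=
      if lab_succ E S && (e_let s == Z) then
        (Alpha, None, lab_union E S)
      else if lab_succ S E && (e_let e == H) then
        (Beta, lab_union E S, None)
      else
        ((if lab_nonempty E && lab_nonempty S then Qq else Empty), S, E) in
    Some (Tile (e_let e) (e_id e) (e_let s) (e_id s) c,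
          take i st ++ [:: Edge (e_let s) (e_id s) north;
                           Edge (e_let e) (e_id e) west] ++ drop i.+2 st)
  else None.

Fixpoint fe_run (st : seq edge) (ps : seq nat) : option (seq tile * seq edge) :=
  match ps with
  | [::] => Some ([::], st)
  | i :: ps' =>
      match fe_step st i with
      | None => None
      | Some (t, st') =>
          match fe_run st' ps' with
          | None => None
          | Some (ts, fin) => Some (t :: ts, fin)
          end
      end
  end.

(* Initial labelling of the southeast boundary of Gamma(X(A)). *)
Definition init_path (B : seq (seq nat)) : seq edge :=
  [seq Edge (nth Z (XA B) k) k
        (Some (nth 0 (aword_trunc B) k, nth 0 (aword_trunc B) k))
  | k <- iota 0 (size (aword_trunc B))].

(* The northwest boundary word 0^l L^r H^k of Gamma(X). *)
Definition nw_word (X : seq letter) : seq letter :=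
  nseq (count_mem Z X) Z ++ nseq (count_mem L X) L ++ nseq (count_mem H X) H.

(* ps encodes a tiling of Gamma(X(A)) (together with an order of        *)
(* processing its tiles), and ts is the resulting filling T(A).         *)
Definition fe_tableau (B : seq (seq nat)) (ps : seq nat) (ts : seq tile) : Prop :=
  exists fin, fe_run (init_path B) ps = Some (ts, fin) /\
              map e_let fin = nw_word (XA B).

(* Strips of a tile: its north-strip is the strip of its horizontal    *)
(* (south/north) edges, its west-strip that of its vertical (east/west) *)
(* edges, if any. *)
Definition north_strip (t : tile) : option nat :=
  if t_slet t == Z then Some (t_sid t) else None.
Definition west_strip (t : tile) : option nat :=
  if t_elet t == H then Some (t_eid t) else None.

(* Tile k is forced empty by (i): it is in the same north-strip as, and *)
(* above, a tile containing alpha.  Along a strip, tiles are placed in  *)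
(* order away from the southeast boundary, so "above" = placed later.   *)
Definition forced_by_alpha (ts : seq tile) (k : nat) : Prop :=
  exists2 k', k' < k &
    [/\ t_cont (nth (Tile Z 0 Z 0 Empty) ts k') = Alpha,
        north_strip (nth (Tile Z 0 Z 0 Empty) ts k') != None
      & north_strip (nth (Tile Z 0 Z 0 Empty) ts k) =
        north_strip (nth (Tile Z 0 Z 0 Empty) ts k')].

Definition forced_by_beta (ts : seq tile) (k : nat) : Prop :=
  exists2 k', k' < k &
    [/\ t_cont (nth (Tile Z 0 Z 0 Empty) ts k') = Beta,
        west_strip (nth (Tile Z 0 Z 0 Empty) ts k') != None
      & west_strip (nth (Tile Z 0 Z 0 Empty) ts k) =
        west_strip (nth (Tile Z 0 Z 0 Empty) ts k')].

Definition tile_at (ts : seq tile) (k : nat) : tile := nth (Tile Z 0 Z 0 Empty) ts k.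

(* Main.v *)
From HB Require Import structures.
Require Import Defs.
From mathcomp Require Import all_boot.
Set Implicit Arguments. Unset Strict Implicit.

Definition edge_enc (e : edge) := (e_let e, e_id e, e_lab e).
Definition edge_dec (p : letter * nat * label) := Edge p.1.1 p.1.2 p.2.
Lemma edge_encK : cancel edge_enc edge_dec. Proof. by case. Qed.
HB.instance Definition _ := Equality.copy edge (can_type edge_encK).

Definition isA x t := (t_cont t == Alpha) && (t_slet t == Z) && (t_sid t == x).
Definition isB x t := (t_cont t == Beta) && (t_elet t == H) && (t_eid t == x).
Definition ne := lab_nonempty.
Definition eok pre e :=
  [&& (e_let e == Z) ==> has (isA (e_id e)) pre ==> ~~ ne (e_lab e),
      (e_let e == H) ==> has (isB (e_id e)) pre ==> ~~ ne (e_lab e)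
    & ~~ ne (e_lab e) ==> ((e_let e == Z) && has (isA (e_id e)) pre)
                        || ((e_let e == H) && has (isB (e_id e)) pre)].
Definition Inv pre st := uniq (map e_id st) && all (eok pre) st.
Definition TP pre t :=
  [&& (t_slet t == Z) && has (isA (t_sid t)) pre ==> (t_cont t == Empty),
      (t_elet t == H) && has (isB (t_eid t)) pre ==> (t_cont t == Empty)
    & (t_cont t == Empty) ==> ((t_slet t == Z) && has (isA (t_sid t)) pre)
                        || ((t_elet t == H) && has (isB (t_eid t)) pre)].

Lemma eok_rcons pre t x : ~~ isA (e_id x) t -> ~~ isB (e_id x) t ->
  eok (rcons pre t) x = eok pre x.
Proof. by move=> /negbTE a /negbTE b; rewrite /eok !has_rcons a b. Qed.

Lemma uniq_swap (T : eqType) (x y : seq T) p q :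
  uniq (x ++ p :: q :: y) = uniq (x ++ q :: p :: y).
Proof.
apply: perm_uniq; rewrite perm_cat2l.
by rewrite -[p :: q :: y]/([:: p; q] ++ y) -[q :: p :: y]/([:: q; p] ++ y) perm_cat2r
   -[[:: p; q]]/([:: p] ++ [:: q]) perm_catC.
Qed.

Definition outc (E S : label) (le ls : letter) :=
  if lab_succ E S && (ls == Z) then (Alpha, None, lab_union E S)
  else if lab_succ S E && (le == H) then (Beta, lab_union E S, None)
  else ((if lab_nonempty E && lab_nonempty S then Qq else Empty), S, E).

Lemma step_core pre a b le ide labe ls ids labs t st' :
  valid_tile le ls -> Inv pre (a ++ Edge le ide labe :: Edge ls ids labs :: b) ->
  (let '(c, north, west) := outc labe labs le ls in
   Some (Tile le ide ls ids c, a ++ [:: Edge ls ids north; Edge le ide west] ++ b))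
   = Some (t, st') ->
  Inv (rcons pre t) st' && TP pre t.
Proof.
move=> hv; rewrite /Inv map_cat /= all_cat /= => /andP[hu /and4P[ha he hs hb]].
have hu2 : uniq (ide :: ids :: map e_id (a ++ b)).
  by rewrite map_cat -[_ :: _ :: _]/([:: ide; ids] ++ _) -(perm_uniq (permEl (perm_catCA (map e_id a) [:: ide; ids] (map e_id b)))).
move: hu2 => /= /andP[]; rewrite inE negb_or => /andP[nei nea] /andP[nsa _].
have key : forall c x, (x \in a) || (x \in b) ->
    eok (rcons pre (Tile le ide ls ids c)) x = eok pre x.
  move=> c x hx; have hm : e_id x \in map e_id (a ++ b) by apply: map_f; rewrite mem_cat.
  apply: eok_rcons; rewrite /isA /isB /=; apply/negP => /andP[_ /eqP E].
    by move: nsa; rewrite E hm.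
  by move: nea; rewrite E hm.
have hA : forall c, all (eok (rcons pre (Tile le ide ls ids c))) a.
  by move=> c; apply/allP => x hx; rewrite key ?hx //; exact: (allP ha).
have hB : forall c, all (eok (rcons pre (Tile le ide ls ids c))) b.
  by move=> c; apply/allP => x hx; rewrite key ?hx ?orbT //; exact: (allP hb).
move: he hs; clear key.
case: le hv hA hB => //; case: ls => // _ hA hB; case: labe => [[a1 b1]|]; case: labs => [[a2 b2]|];
  rewrite /outc /=; repeat (case: ifP; rewrite ?andbF ?andbT //= => _);
  move=> he hs; case=> <- <-; move: he hs; rewrite map_cat /= -uniq_swap hu all_cat /= ?hA ?hB /=;
  rewrite /eok /TP /isA /isB /= ?has_rcons /= ?eqxx /=;
  move: (has (isA ids) pre) (has (isB ide) pre) (has (isA ide) pre) (has (isB ids) pre) => [] [] [] [].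
all: try by [].
all: idtac.

Qed.

Lemma step_inv pre st i t st' : Inv pre st -> fe_step st i = Some (t, st') ->
  Inv (rcons pre t) st' && TP pre t.
Proof.
rewrite /fe_step; case: ifP => // /andP[hi hv].
have Hdec : st = take i st ++ nth dummy_edge st i :: nth dummy_edge st i.+1 :: drop i.+2 st.
  by rewrite -{1}(cat_take_drop i st) (drop_nth dummy_edge (ltnW hi)) (drop_nth dummy_edge hi).
rewrite {1}Hdec; move: hv.
case: (nth dummy_edge st i) => le ide labe; case: (nth dummy_edge st i.+1) => ls ids labs /= hv.
exact: step_core.
Qed.

Definition dt := Tile Z 0 Z 0 Empty.

Lemma run_inv ps pre st ts fin : Inv pre st -> fe_run st ps = Some (ts, fin) ->
  forall k, k < size ts -> TP (pre ++ take k ts) (nth dt ts k).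
Proof.
elim: ps pre st ts fin => [|i ps IH] pre st ts fin /=; first by move=> _ [<-].
case E: (fe_step st i) => [[t st']|] // hI.
case E2: (fe_run st' ps) => [[ts' fin']|] // [<-] _.
have /andP[hI' hT] := step_inv hI E.
case=> [|k] /= hk; first by rewrite cats0.
by rewrite -cat_rcons; exact: (IH _ _ _ _ hI' E2 k hk).
Qed.

Lemma init_inv B : Inv [::] (init_path B).
Proof.
rewrite /Inv /init_path -map_comp /= map_id iota_uniq /=.
rewrite all_map; apply/allP => k _. by rewrite /preim /eok /= !implybT.
Qed.

Lemma forcedA ts k : k < size ts ->
  forced_by_alpha ts k <-> (t_slet (tile_at ts k) == Z) && has (isA (t_sid (tile_at ts k))) (take k ts).
Proof.
move=> hk; rewrite /forced_by_alpha /tile_at /north_strip; split.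
  case=> k' hk' [hc hn hs]; move: hn hs; case: ifP => // /eqP h1 _.
  case: ifP => // /eqP h2 [h3]; apply/(has_nthP dt).
  exists k'; first by rewrite size_take hk.
  by rewrite nth_take // /isA hc h1 h3 !eqxx.
case/andP=> /eqP h1 /(has_nthP dt)[k' hk']; rewrite size_take hk in hk'.
rewrite nth_take // /isA => /andP[/andP[/eqP hc /eqP h2] /eqP h3].
by exists k' => //; split; rewrite ?hc ?h1 ?h2 ?h3.
Qed.

Lemma forcedB ts k : k < size ts ->
  forced_by_beta ts k <-> (t_elet (tile_at ts k) == H) && has (isB (t_eid (tile_at ts k))) (take k ts).
Proof.
move=> hk; rewrite /forced_by_beta /tile_at /west_strip; split.
  case=> k' hk' [hc hn hs]; move: hn hs; case: ifP => // /eqP h1 _.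
  case: ifP => // /eqP h2 [h3]; apply/(has_nthP dt).
  exists k'; first by rewrite size_take hk.
  by rewrite nth_take // /isB hc h1 h3 !eqxx.
case/andP=> /eqP h1 /(has_nthP dt)[k' hk']; rewrite size_take hk in hk'.
rewrite nth_take // /isB => /andP[/andP[/eqP hc /eqP h2] /eqP h3].
by exists k' => //; split; rewrite ?hc ?h1 ?h2 ?h3.
Qed.

Theorem lemma3p1 (n r : nat) (B : seq (seq nat)) (ps : seq nat) (ts : seq tile) :
  r <= n ->
  assemblee n.+1 r.+1 B ->
  fe_tableau B ps ts ->
  [/\ (forall k, k < size ts -> forced_by_alpha ts k -> t_cont (tile_at ts k) = Empty),
      (forall k, k < size ts -> forced_by_beta ts k -> t_cont (tile_at ts k) = Empty)
    & (forall k, k < size ts -> ~ forced_by_alpha ts k -> ~ forced_by_beta ts k ->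
         t_cont (tile_at ts k) <> Empty)].
Proof.
move=> _ _ [fin [hrun _]].
have T k (hk : k < size ts) := run_inv (init_inv B) hrun hk.
split.
- move=> k hk /(forcedA hk) h; move: (T k hk); rewrite /TP /= -/(tile_at ts k) h.
  by case/and3P => /eqP.
- move=> k hk /(forcedB hk) h; move: (T k hk); rewrite /TP /= -/(tile_at ts k) h.
  by case/and3P => _ /eqP.
- move=> k hk nA nB hE; move: (T k hk); rewrite /TP /= -/(tile_at ts k) hE eqxx.
  case/and3P => _ _ /= /orP[h|h].
    by apply: nA; apply/(forcedA hk).
  by apply: nB; apply/(forcedB hk).
Qed.
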